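(* Let $R[x,y]$ be a relation with $n$ tuples whose vectors $(x,y)$ have $\ell_2$ norm at most $B$. Let $\widehat{E[X]}=\frac1n\sum_{t\in R}t[x]$, $\widehat{E[X^2]}=\frac1n\sum_{t\in R}t[x]^2$, $\widehat{\sigma^2_x}=\widehat{E[X^2]}-\widehat{E[X]}^2$, and let $\widetilde{E[X]}=\widehat{E[X]}+e_1$, $\widetilde{E[X^2]}=\widehat{E[X^2]}+e_2$ with $e_1,e_2\sim\mathcal N(0,\sigma^2/n^2)$, where $\sigma=\sqrt{2\ln(1.25/\delta)}\,\Delta/\epsilon$ with $\Delta=O(B^2)$, and $\widetilde{\sigma^2_x}=\widetilde{E[X^2]}-\widetilde{E[X]}^2$. Then, in the asymptotic regime $n,B\to\infty$ and $\epsilon,\delta,p\to0$, with probability at least $1-p$, $$|\widehat{\sigma^2_x}-\widetilde{\sigma^2_x}|=O\!\left(\frac{B^4\ln(1/\delta)\ln(1/p)}{\epsilon^2 n}\right).$$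
   Context: Here $e_1,e_2$ are the Gaussian noises added (after normalization by $n$) to the aggregated monomials $\sum x$ and $\sum x^2$ by a Gaussian mechanism with sensitivity $\Delta$; the probability is over this noise, and $\epsilon,\delta\in(0,1]$. *)

(* Defs.v *)
From HB Require Import structures.
From mathcomp Require Import all_boot all_order all_algebra.
From mathcomp Require Import all_classical all_reals all_analysis.
Set Implicit Arguments. Unset Strict Implicit. Unset Printing Implicit Defensive.
Import Order.TTheory GRing.Theory Num.Theory.
Local Open Scope ring_scope.

Section defs.
Variable R : realType.

(* A relation R[x,y] with n tuples t_0, ..., t_{n-1}; (t i).1 = t[x], (t i).2 = t[y]. *)

Definition emp_EX (n : nat) (t : 'I_n -> R * R) : R :=
  (\sum_(i < n) (t i).1) / n%:R.

Definition emp_EX2 (n : nat) (t : 'I_n -> R * R) : R :=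
  (\sum_(i < n) (t i).1 ^+ 2) / n%:R.

Definition emp_var (n : nat) (t : 'I_n -> R * R) : R :=
  emp_EX2 t - emp_EX t ^+ 2.

Definition noisy_var (n : nat) (t : 'I_n -> R * R) (e : R * R) : R :=
  (emp_EX2 t + e.2) - (emp_EX t + e.1) ^+ 2.

Definition gauss_sigma (eps delta Delta : R) : R :=
  Num.sqrt (2 * ln ((5 / 4) / delta)) * Delta / eps.

(* Joint law of (e1, e2): independent N(0, sigma^2/n^2), i.e. standard
   deviation sigma / n each. *)
Definition noise_law (n : nat) (eps delta Delta : R) :=
  (normal_prob 0 (gauss_sigma eps delta Delta / n%:R)
   \x normal_prob 0 (gauss_sigma eps delta Delta / n%:R))%E.

End defs.

(* Main.v *)
Require Import Defs.
From HB Require Import structures.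
From mathcomp Require Import all_boot all_order all_algebra.
From mathcomp Require Import all_classical all_reals all_analysis.
From mathcomp Require Import measurable_realfun normal_distribution ring lra.
Import Order.TTheory GRing.Theory Num.Theory.
Local Open Scope classical_set_scope.
Local Open Scope ring_scope.

Lemma mset_ler d (T : measurableType d) (R : realType) (f g : T -> R) :
  measurable_fun setT f -> measurable_fun setT g -> measurable [set x | f x <= g x].
Proof.
move=> mf mg.
have := measurable_fun_ler mf mg measurableT (Y:=[set b : bool | b]) I.
rewrite setTI; congr measurable; apply/seteqP; split => x /=; by [].
Qed.

Lemma mset_ltr d (T : measurableType d) (R : realType) (f g : T -> R) :
  measurable_fun setT f -> measurable_fun setT g -> measurable [set x | f x < g x].
Proof.
move=> mf mg.
have := measurable_fun_ltr mf mg measurableT (Y:=[set b : bool | b]) I.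
rewrite setTI; congr measurable; apply/seteqP; split => x /=; by [].
Qed.

Lemma normal_tail (R : realType) (s M : R) : 0 < s ->
  (normal_prob 0 s [set x : R | (s^+2 * M < x^+2)%R] <= (2 * expR (- (3/8) * M))%:E)%E.
Proof.
move=> s0.
have mA : measurable [set x : R | s^+2 * M < x^+2].
  apply: mset_ltr => //; exact: measurable_funX.
set c := 2 * expR (- (3/8) * M).
have c0 : 0 <= c by rewrite mulr_ge0 // expR_ge0.
rewrite /normal_prob.
apply: (@le_trans _ _ (\int[lebesgue_measure]_(x in [set x : R | (s^+2 * M < x^+2)%R]) (c%:E * (normal_pdf 0 (2*s) x)%:E))%E).
  apply: ge0_le_integral => //.
  - by move=> x _; rewrite lee_fin normal_pdf_ge0.
  - apply/measurable_EFinP; apply: measurable_funTS; exact: measurable_normal_pdf.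
  - apply: emeasurable_funM => //; apply/measurable_EFinP; apply: measurable_funTS; exact: measurable_normal_pdf.
  move=> x /= hx; rewrite -EFinM lee_fin.
  rewrite !normal_pdfE ?gt_eqF ?mulr_gt0 //.
  have sn0 : s != 0 by rewrite gt_eqF.
  rewrite /normal_fun !subr0.
  have e : -(x^+2)/(s^+2*+2) = -(3/8)*(x^+2/s^+2) + -(x^+2)/((2*s)^+2*+2) by field.
  rewrite e expRD.
  have hp : normal_peak s = 2 * normal_peak (2*s).
    rewrite /normal_peak.
    have -> : (2*s)^+2 * pi *+ 2 = 2^+2 * (s^+2 * pi *+2) by rewrite exprMn -mulrA -mulrnAr.
    rewrite sqrtrM ?sqr_ge0 // sqrtr_sqr ger0_norm // invfM mulrA divff ?mul1r //.
  have hE : expR(-(3/8)*(x^+2/s^+2)) <= expR(-(3/8)*M).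
    rewrite ler_expR !mulNr lerN2.
    have h38 : (0:R) < 3/8 by rewrite divr_gt0.
    rewrite ler_pM2l //.
    rewrite ler_pdivlMr ?exprn_gt0 // mulrC; exact: ltW.
  rewrite hp /c; move: hE.
  set E3 := expR (-(3/8)*(x^+2/s^+2)); set E1 := expR (- x ^+ 2 / ((2 * s) ^+ 2 *+ 2)) => hE.
  rewrite -!mulrA; apply: ler_wpM2l => //.
  rewrite mulrCA; apply: ler_wpM2r => //.
  by rewrite mulr_ge0 ?normal_peak_ge0 ?expR_ge0.
rewrite ge0_integralZl_EFin //=.
- rewrite -[leRHS]mule1; apply: lee_wpmul2l; first by rewrite lee_fin.
  exact: (@probability_le1 _ _ _ (normal_prob 0 (2*s)) _ mA).
- by move=> x _; rewrite lee_fin normal_pdf_ge0.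
- apply/measurable_EFinP; apply: measurable_funTS; exact: measurable_normal_pdf.
Qed.

Lemma normal_good (R : realType) (s M : R) : 0 < s ->
  exists r : R, normal_prob 0 s [set x : R | (x^+2 <= s^+2 * M)%R] = r%:E /\
     1 - 2 * expR (- (3/8) * M) <= r.
Proof.
move=> s0.
have mA : measurable [set x : R | s^+2 * M < x^+2].
  apply: mset_ltr => //; exact: measurable_funX.
have hT := @normal_tail R s M s0.
set A := [set x : R | s^+2 * M < x^+2] in mA hT.
have A0 : (0 <= normal_prob 0 s A)%E by exact: measure_ge0.
have A1 : (normal_prob 0 s A <= 1)%E by exact: (@probability_le1 _ _ _ (normal_prob 0 s) _ mA).
have fA : normal_prob 0 s A \is a fin_num.
  by rewrite ge0_fin_numE // (le_lt_trans A1) // ltry.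
exists (1 - fine (normal_prob 0 s A)); split.
  have -> : [set x : R | (x^+2 <= s^+2 * M)%R] = ~` A.
    by apply/seteqP; split => x /=; rewrite /A /= leNgt => /negP.
  by rewrite (@probability_setC _ _ _ (normal_prob 0 s) _ mA) EFinB fineK.
rewrite lerB //. by rewrite -lee_fin fineK.
Qed.

Lemma mS (R : realType) (n : nat) (t : 'I_n -> R * R) (c : R) :
  measurable [set e : R * R | `|emp_var t - noisy_var t e| <= c].
Proof.
apply: mset_ler => //.
apply: measurableT_comp; first exact: normr_measurable.
rewrite /noisy_var.
apply: measurable_funB => //.
apply: measurable_funB.
  apply: measurable_funD => //; exact: measurable_snd.
apply: measurable_funX; apply: measurable_funD => //; exact: measurable_fst.
Qed.

Lemma mean_bound (R : realType) (n : nat) (t : 'I_n -> R * R) (B : R) :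
  (0 < n)%N -> (forall i, Num.sqrt ((t i).1 ^+ 2 + (t i).2 ^+ 2) <= B) ->
  `|emp_EX t| <= B.
Proof.
move=> n0 hB.
have hx i : `|(t i).1| <= B.
  apply: le_trans (hB i).
  rewrite -sqrtr_sqr; rewrite ler_sqrt ?addr_ge0 ?sqr_ge0 //.
  by rewrite lerDl sqr_ge0.
have n0' : (0 : R) < n%:R by rewrite ltr0n.
rewrite /emp_EX normrM [X in _ * X]ger0_norm ?invr_ge0 ?ler0n // ler_pdivrMr //.
apply: le_trans (ler_norm_sum _ _ _) _.
apply: le_trans (ler_sum _ (fun i _ => hx i)) _.
by rewrite sumr_const card_ord mulr_natr.
Qed.

Lemma det (R : realType) (m X2 e1 e2 s M B : R) : `|m| <= B -> 0 <= s -> 1 <= M ->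
  e1^+2 <= s^+2 * M -> e2^+2 <= s^+2 * M ->
  `|(X2 - m^+2) - ((X2 + e2) - (m + e1)^+2)| <= s * M * (1 + 2 * B) + s^+2 * M.
Proof.
move=> hm s0 M1 h1 h2.
have ab e : e^+2 <= s^+2 * M -> `|e| <= s * M.
  move=> he.
  have hsm : s^+2 * M <= (s * M)^+2 by rewrite exprMn ler_wpM2l ?sqr_ge0 //; nra.
  have sm0 : 0 <= s * M by rewrite mulr_ge0 //; lra.
  have : `|e|^+2 <= (s * M)^+2 by rewrite real_normK ?num_real //; lra.
  by rewrite ler_sqr ?nnegrE.
have a1 := ab _ h1; have a2 := ab _ h2.
have -> : (X2 - m^+2) - ((X2 + e2) - (m + e1)^+2) = - e2 + 2 * (m * e1) + e1^+2 by ring.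
apply: le_trans (ler_normD _ _) _.
apply: le_trans (lerD (ler_normD _ _) (lexx _)) _.
rewrite normrN normrM normrM normr_nat [X in _ + X]ger0_norm ?sqr_ge0 //.
have hme : `|m| * `|e1| <= B * (s * M) by apply: ler_pM.
nra.
Qed.

Theorem lemma1 (R : realType) (CD : R) (hCD : 0 < CD) :
  exists K : R, 0 < K /\
  exists (N0 : nat) (B0 eps0 delta0 p0 : R),
    0 < eps0 /\ 0 < delta0 /\ 0 < p0 /\
    forall (n : nat) (B eps delta p Delta : R) (t : 'I_n -> R * R),
      (0 < n)%N -> (N0 <= n)%N ->
      B0 <= B ->
      0 < eps <= eps0 -> eps <= 1 ->
      0 < delta <= delta0 -> delta <= 1 ->
      0 < p <= p0 ->
      0 < Delta <= CD * B ^+ 2 ->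
      (forall i, Num.sqrt ((t i).1 ^+ 2 + (t i).2 ^+ 2) <= B) ->
      (((1 - p)%R)%:E <=
        noise_law n eps delta Delta
          [set e | (`|emp_var t - noisy_var t e|
                   <= K * (B ^+ 4 * ln (delta^-1) * ln (p^-1) / (eps ^+ 2 * n%:R)))%R])%E.
Proof.
exists (96 * CD + 64 * CD ^+ 2); split; first by rewrite addr_gt0 ?mulr_gt0 ?exprn_gt0.
exists 1%N, 1, 1, (expR (-1)), (expR (-1)).
split; first exact: ltr01.
split; first exact: expR_gt0.
split; first exact: expR_gt0.
move=> n B eps delta p Delta t n0 _ B1 /andP[e0 _] e1 /andP[d0 d1] _ /andP[p0 p1]
  /andP[D0 D1] hB.
have lnge1 (q : R) : 0 < q -> q <= expR (-1) -> 1 <= ln q^-1.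
  move=> q0 q1; rewrite lnV ?posrE // lerNr.
  by rewrite -[X in _ <= X]expRK ler_ln ?posrE ?expR_gt0.
have l1 := lnge1 _ p0 p1; have lam1 := lnge1 _ d0 d1.
set l := ln p^-1 in l1 *; set lam := ln delta^-1 in lam1 *.
have n0' : (0 : R) < n%:R by rewrite ltr0n.
set u := eps^-1; set v := (n%:R : R)^-1.
have u1 : 1 <= u by rewrite /u invr_ge1 // ?unitfE ?gt_eqF.
have v0 : 0 < v by rewrite /v invr_gt0.
have v1 : v <= 1 by rewrite /v invr_le1 ?unitfE ?gt_eqF // ler1n.
have -> : B ^+ 4 * lam * l / (eps ^+ 2 * n%:R) = lam * l * (B^+4 * u^+2 * v).
  by rewrite invfM -exprVn -/u -/v; ring.
set G := ln ((5/4) / delta).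
have hG : G = ln (5/4) + lam.
  by rewrite /G lnM ?posrE ?invr_gt0 //.
have l54 : 0 <= ln (5/4 : R) by apply: ln_ge0; lra.
have l54' : ln (5/4 : R) <= 1.
  rewrite -[X in _ <= X]expRK ler_ln ?posrE ?expR_gt0 //.
  by have := expR_ge1Dx (1:R); lra.
set x := Num.sqrt (2 * G).
have x0 : 0 <= x by exact: sqrtr_ge0.
have x2 : x ^+ 2 = 2 * G by rewrite sqr_sqrtr //; lra.
have xl : x <= 2 * lam by nra.
set s := gauss_sigma eps delta Delta / n%:R.
have sE : s = x * Delta * u * v by [].
have xpos : 0 < x by rewrite /x sqrtr_gt0; lra.
have u0 : 0 < u by lra.
have s0 : 0 < s by rewrite sE !mulr_gt0.
have hs1 : s <= 2 * lam * (CD * B^+2) * u * v.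
  rewrite sE; apply: ler_wpM2r; first lra.
  apply: ler_wpM2r; first lra.
  by apply: ler_pM => //; lra.
have hs2 : s^+2 <= 4 * lam * (CD * B^+2)^+2 * u^+2 * v^+2.
  have hD2 : Delta^+2 <= (CD * B^+2)^+2 by rewrite ler_sqr ?nnegrE; lra.
  have -> : s^+2 = x^+2 * Delta^+2 * u^+2 * v^+2 by rewrite sE; ring.
  rewrite x2.
  apply: ler_wpM2r; first by rewrite sqr_ge0.
  apply: ler_wpM2r; first by rewrite sqr_ge0.
  apply: ler_pM; first lra; first by rewrite sqr_ge0.
    lra.
  exact: hD2.
set M := 16 * l.
have [r [Er hr]] := @normal_good R s M s0.
set E := [set x : R | (x^+2 <= s^+2 * M)%R] in Er.
have mE : measurable E by apply: mset_ler => //; exact: measurable_funX.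
have hr' : 1 - p / 2 <= r.
  apply: le_trans hr; rewrite lerD2l lerN2.
  have pE : p = expR (- l) by rewrite /l lnV ?posrE // opprK lnK ?posrE.
  have -> : - (3/8) * M = - l + - (5 * l) by rewrite /M; field.
  rewrite expRD pE.
  have : 4 <= expR (5 * l) by have := expR_ge1Dx (5 * l); lra.
  have : 0 < expR (- l) by exact: expR_gt0.
  rewrite !expRN => A0 hB4.
  have w0 : 0 < (expR (5 * l))^-1 by rewrite invr_gt0 expR_gt0.
  have hw : expR (5 * l) * (expR (5 * l))^-1 = 1 by rewrite divff // gt_eqF // expR_gt0.
  have hw4 : (expR (5 * l))^-1 <= 1/4 by nra.
  nra.
apply: (@le_trans _ _ (noise_law n eps delta Delta (E `*` E))).
  rewrite /noise_law product_measure1E //.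
  change (((1 - p)%:E <= normal_prob 0 s E * normal_prob 0 s E)%E).
  rewrite Er -EFinM lee_fin.
  have : expR (-1) <= expR (0:R) by rewrite ler_expR; lra.
  rewrite expR0 => e01.
  have p2 : p <= 1 by lra.
  nra.
apply: le_measure; rewrite ?inE; [exact: measurableX | exact: mS |].
move=> [a b] [/= ha hb].
apply: le_trans (@det R (emp_EX t) (emp_EX2 t) a b s M B (@mean_bound R n t B n0 hB) (ltW s0) _ ha hb) _.
  rewrite /M; lra.
set W := B ^+ 4 * u ^+ 2 * v.
have l0 : 0 <= l by lra.
have lam0 : 0 <= lam by lra.
have W0 : 0 <= W by rewrite /W !mulr_ge0 ?exprn_ge0 //; lra.
have hP1 : B * (CD * B^+2) * u * v <= CD * W.
  have -> : B * (CD * B^+2) * u * v = CD * (B^+3 * u * v) by ring.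
  apply: ler_wpM2l; first lra.
  rewrite /W; apply: ler_wpM2r; first lra.
  apply: ler_pM.
  - by rewrite exprn_ge0 //; lra.
  - lra.
  - rewrite (exprSr B 3) -[X in X <= _]mulr1 ler_wpM2l ?exprn_ge0 //; lra.
  - rewrite expr2; nra.
have hP2 : (CD * B^+2)^+2 * u^+2 * v^+2 <= CD^+2 * W.
  have -> : (CD * B^+2)^+2 * u^+2 * v^+2 = CD^+2 * (B^+4 * u^+2 * v) * v.
    rewrite /W; ring.
  rewrite -[X in _ <= X]mulr1; apply: ler_wpM2l; last lra.
  by rewrite mulr_ge0 ?exprn_ge0 //; lra.
have hsB : s * (1 + 2 * B) <= 6 * lam * (B * (CD * B^+2) * u * v).
  have : s * (1 + 2 * B) <= (2 * lam * (CD * B^+2) * u * v) * (3 * B).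
    apply: ler_pM; try lra.
  move=> h; apply: le_trans h _; rewrite le_eqVlt; apply/orP; left; apply/eqP; ring.
have t1 : s * M * (1 + 2 * B) <= 96 * CD * (lam * l * W).
  have -> : s * M * (1 + 2 * B) = 16 * l * (s * (1 + 2 * B)) by rewrite /M; ring.
  apply: le_trans (ler_wpM2l _ hsB) _; first lra.
  have -> : 16 * l * (6 * lam * (B * (CD * B ^+ 2) * u * v)) = 96 * (lam * l) * (B * (CD * B ^+ 2) * u * v) by ring.
  have -> : 96 * CD * (lam * l * W) = 96 * (lam * l) * (CD * W) by ring.
  by apply: ler_wpM2l; [rewrite !mulr_ge0 | exact: hP1].
have t2 : s ^+ 2 * M <= 64 * CD^+2 * (lam * l * W).
  have -> : s^+2 * M = 16 * l * s^+2 by rewrite /M; ring.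
  apply: le_trans (ler_wpM2l _ hs2) _; first lra.
  have -> : 16 * l * (4 * lam * (CD * B ^+ 2) ^+ 2 * u ^+ 2 * v ^+ 2) = 64 * (lam * l) * ((CD * B ^+ 2) ^+ 2 * u ^+ 2 * v ^+ 2) by ring.
  have -> : 64 * CD^+2 * (lam * l * W) = 64 * (lam * l) * (CD^+2 * W) by ring.
  by apply: ler_wpM2l; [rewrite !mulr_ge0 | exact: hP2].
have -> : (96 * CD + 64 * CD ^+ 2) * (lam * l * W) = 96 * CD * (lam * l * W) + 64 * CD^+2 * (lam * l * W) by ring.
exact: lerD.
Qed.
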